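(* Let $\ell\in\mathbb{N}$ and let $G$ be a finite $\ell$-tuple regular group that can be generated by $\ell$ elements. Then $G$ is $1$-ultrahomogeneous, i.e. any two elements of $G$ of the same order are mapped to each other by some automorphism of $G$.
   Context: For $\ell\in\mathbb{N}$, a finite group $G$ is $\ell$-tuple regular if for all tuples $(g_1,\ldots,g_\ell),(h_1,\ldots,h_\ell)\in G^\ell$ (entries may repeat) for which $g_i\mapsto h_i$ defines an isomorphism $\langle g_1,\ldots,g_\ell\rangle\to\langle h_1,\ldots,h_\ell\rangle$, there exists a bijection $\Psi\colon G\to G$ such that for every $g\in G$ the assignment $g_1\mapsto h_1,\ldots,g_\ell\mapsto h_\ell,g\mapsto\Psi(g)$ defines an isomorphism $\langle g_1,\ldots,g_\ell,g\rangle\to\langle h_1,\ldots,h_\ell,\Psi(g)\rangle$. *)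

(* Defs.v *)
From mathcomp Require Import all_boot all_fingroup.
Set Implicit Arguments. Unset Strict Implicit. Unset Printing Implicit Defensive.
Import GroupScope.
Local Open Scope group_scope.

Definition gen_seq (gT : finGroupType) (s : seq gT) : {group gT} :=
  <<[set x in s]>>%G.

Definition tuple_iso (gT : finGroupType) (g h : seq gT) : Prop :=
  size g = size h /\
  exists f : {morphism gen_seq g >-> gT},
    isom (gen_seq g) (gen_seq h) f /\
    forall i, i < size g -> f (nth 1 g i) = nth 1 h i.

Definition tuple_regular (l : nat) (gT : finGroupType) : Prop :=
  forall g h : l.-tuple gT, tuple_iso g h ->
    exists Psi : gT -> gT, bijective Psi /\
      forall x : gT, tuple_iso (rcons g x) (rcons h (Psi x)).

Definition generated_by (l : nat) (gT : finGroupType) : Prop :=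
  exists g : l.-tuple gT, gen_seq g = [set: gT] :> {set gT}.

(* Main.v *)
Require Import Defs.
From mathcomp Require Import all_boot all_fingroup.
From mathcomp Require Import cyclic zify.
Local Open Scope group_scope.

Ltac bsolve := repeat match goal with
  | |- context [?u \in ?a] => case: (u \in a)
  | |- context [?u == ?v] => case: (u == v)
  | |- context [0 < ?m] => case: (0 < m) end; by [].

Section Helpers.
Variable gT : finGroupType.
Implicit Types s t : seq gT.

Lemma tuple_isoI s t (H : {group gT}) (f : {morphism H >-> gT}) :
  gen_seq s :=: H -> size s = size t -> isom H (gen_seq t) f ->
  (forall i, i < size s -> f (nth 1 s i) = nth 1 t i) -> tuple_iso s t.
Proof.
move=> E Hs Hi Hn.
have E' : H = gen_seq s by apply: val_inj; rewrite /= E.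
subst H; split=> //; exists f; split=> //.
Qed.

Lemma gen_seq_eq s s' : {subset s <= 1 :: s'} -> {subset s' <= 1 :: s} ->
  gen_seq s :=: gen_seq s'.
Proof.
have sub : forall a b : seq gT, {subset a <= 1 :: b} ->
   (gen_seq a \subset gen_seq b).
  move=> a b Hab; rewrite /gen_seq /= gen_subG; apply/subsetP=> z.
  rewrite inE => /Hab; rewrite in_cons => /orP [/eqP -> | zb].
    exact: group1.
  by apply: mem_gen; rewrite inE.
by move=> H1 H2; apply/eqP; rewrite eqEsubset !sub.
Qed.

Lemma tuple_iso_transfer s t s' t' :
  tuple_iso s t -> size s' = size t' ->
  gen_seq s' :=: gen_seq s -> gen_seq t' :=: gen_seq t ->
  (forall i, i < size s' ->
     (exists2 j, j < size s & nth 1 s' i = nth 1 s j /\ nth 1 t' i = nth 1 t j)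
     \/ (nth 1 s' i = 1 /\ nth 1 t' i = 1)) ->
  tuple_iso s' t'.
Proof.
move=> [Hsz [f [Hiso Hn]]] Hsz' Es Et Hidx.
apply: (@tuple_isoI s' t' _ f Es Hsz'); first by rewrite Et.
move=> i /Hidx [[j Hj [-> ->]]|[-> ->]]; first exact: Hn.
exact: morph1.
Qed.

Lemma pad s t n : tuple_iso s t -> tuple_iso (s ++ nseq n 1) (t ++ nseq n 1).
Proof.
move=> H; have [Hsz _] := H.
apply: (@tuple_iso_transfer _ _ _ _ H).
- by rewrite !size_cat Hsz.
- apply: gen_seq_eq => z; rewrite in_cons ?mem_cat ?mem_nseq.
    bsolve.
  bsolve.
- apply: gen_seq_eq => z; rewrite in_cons ?mem_cat ?mem_nseq.
    bsolve.
  bsolve.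
move=> i Hi; rewrite !nth_cat -Hsz.
case: ltnP => Hi'; first by left; exists i.
by right; rewrite !nth_nseq; case: ifP.
Qed.

Lemma unpad s t n z w :
  size s = size t ->
  tuple_iso (rcons (s ++ nseq n 1) z) (rcons (t ++ nseq n 1) w) ->
  tuple_iso (rcons s z) (rcons t w).
Proof.
move=> Hsz H.
apply: (@tuple_iso_transfer _ _ _ _ H).
- by rewrite !size_rcons Hsz.
- apply: gen_seq_eq => u; rewrite in_cons ?mem_rcons ?in_cons ?mem_cat ?mem_nseq.
    bsolve.
  bsolve.
- apply: gen_seq_eq => u; rewrite in_cons ?mem_rcons ?in_cons ?mem_cat ?mem_nseq.
    bsolve.
  bsolve.
move=> i; rewrite size_rcons ltnS leq_eqVlt => /orP [/eqP ->|Hi].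
  left; exists (size s + n); first by rewrite size_rcons size_cat size_nseq.
  by rewrite !nth_rcons !size_cat !size_nseq -Hsz !ltnn !eqxx.
left; exists i; first by rewrite size_rcons size_cat ltnS ltnW // ltn_addr.
rewrite !nth_rcons !size_cat !size_nseq -Hsz Hi ltn_addr //.
by rewrite !nth_cat -Hsz Hi.
Qed.

End Helpers.

Theorem lemma2p3 (l : nat) (gT : finGroupType) :
  tuple_regular l gT -> generated_by l gT ->
  forall x y : gT, #[x] = #[y] ->
    exists f : {perm gT}, f \in Aut [set: gT] /\ f x = y.
Proof.
move=> Hreg [g Hg] x y Hxy.
have base : tuple_iso [:: x] [:: y].
  have dvd : #[y] %| #[x] by rewrite Hxy.
  apply: (@tuple_isoI _ _ _ _ (eltm_morphism dvd)) => //.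
  - by rewrite /gen_seq /=; congr <<_>>; apply/setP=> u; rewrite !inE.
  - have E : gen_seq [:: y] :=: <[y]>.
      by rewrite /gen_seq /=; congr <<_>>; apply/setP=> u; rewrite !inE.
    by apply/isomP; rewrite E injm_eltm Hxy dvdnn im_eltm.
  - by case=> //= _; rewrite eltm_id.
have main : forall k, k <= l -> exists w : seq gT,
    size w = k /\ tuple_iso (x :: take k g) (y :: w).
  elim=> [_|k IH Hk]; first by exists [::]; split => //; rewrite take0.
  have [w [Hw Hiso]] := IH (ltnW Hk).
  set n := l - k.+1.
  have Hpad := @pad _ _ _ n Hiso.
  have Ts : size ((x :: take k g) ++ nseq n 1) == l.
    by rewrite size_cat size_nseq /= size_take size_tuple Hk; apply/eqP; lia.
  have Tt : size ((y :: w) ++ nseq n 1) == l.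
    by rewrite size_cat size_nseq /= Hw; apply/eqP; lia.
  have [Psi [_ HPsi]] := Hreg (Tuple Ts) (Tuple Tt) Hpad.
  have Hsz0 : size (x :: take k g) = size (y :: w).
    by rewrite /= size_take size_tuple Hk Hw.
  have H := @unpad _ _ _ _ _ _ Hsz0 (HPsi (nth 1 g k)).
  exists (rcons w (Psi (nth 1 g k))); split; first by rewrite size_rcons Hw.
  rewrite (take_nth 1) ?size_tuple //.
have [w [_ Hiso]] := main l (leqnn l).
rewrite take_oversize ?size_tuple // in Hiso.
have [_ [f [Hi Hn]]] := Hiso.
have ET : gen_seq (x :: g) :=: [set: gT].
  apply/eqP; rewrite eqEsubset subsetT /= -Hg /gen_seq /= genS //.
  by apply/subsetP=> u; rewrite !inE => ->; rewrite orbT.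
have /isomP [injf imf] := Hi.
have Gf : f @* gen_seq (x :: g) = gen_seq (x :: g).
  apply/eqP; rewrite eqEcard card_injm // leqnn andbT.
  by apply/subsetP=> u _; rewrite ET inE.
exists (aut injf Gf); split.
  by rewrite -ET; apply: Aut_aut.
rewrite autE; first by apply: (Hn 0).
by rewrite ET inE.
Qed.
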